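(* Let $k\ge 1$ and $n\ge 2k+1$. The map $f:X_{n,k}\to X_{n,k}$ is a bijection, and for every $x\in X_{n,k}$ the strings $x$ and $f(x)$ have no $1$ at a common position, $f(x)\neq x$ and $f^2(x)\ne x$. Consequently, for every $x\in X_{n,k}$ the sequence $C(x)=(x,f(x),f^2(x),\dots)$, continued until $x$ reappears, is a cycle of length at least $3$ in $K(n,k)$ (vertices identified with characteristic vectors), and these cycles partition the vertex set.
   Context: $X_{n,k}$ is the set of binary strings of length $n$ with exactly $k$ ones; a $k$-subset of $[n]$ is identified with its characteristic vector, so two vertices of the Kneser graph $K(n,k)$ are adjacent iff their strings have no $1$ at a common position. Positions are taken cyclically modulo $n$. Cyclic parenthesis matching: regard $x$ as a cyclic string, $1$s as opening and $0$s as closing brackets; each $1$ at position $i$ is matched to the last $0$ of the shortest cyclic substring starting at position $i$ and going to the right that contains equally many $0$s and $1$s. Since $n\ge 2k+1$, every $1$ is matched and exactly $n-2k$ zeros are unmatched. $f(x)$ is obtained from $x$ by complementing all matched bits (matched $1$s and matched $0$s), leaving unmatched $0$s unchanged. *)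

(* Defs.v *)
From mathcomp Require Import all_boot.
Set Implicit Arguments. Unset Strict Implicit. Unset Printing Implicit Defensive.

Section Kneser.
Variable n : nat.

Definition cbit (x : n.-tuple bool) (m : nat) : bool := nth false x (m %% n).

(* X_{n,k}: strings with exactly k ones (characteristic vectors of k-subsets). *)
Definition Xnk (k : nat) : {set n.-tuple bool} := [set x : n.-tuple bool | count id x == k].

Definition kadj : rel (n.-tuple bool) :=
  fun x y => [forall i : 'I_n, ~~ (tnth x i && tnth y i)].

Definition ones_in (x : n.-tuple bool) (i l : nat) : nat :=
  \sum_(0 <= d < l) cbit x (i + d).

Definition balanced (x : n.-tuple bool) (i l : nat) : bool :=
  (0 < l <= n) && ((ones_in x i l).*2 == l).

Definition matched1 (x : n.-tuple bool) (i : nat) : bool :=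
  cbit x i && has (balanced x i) (iota 1 n).

(* position of the last 0 of the shortest balanced substring starting at i:
   its length is (find ... ).+1, so its last position is i + find ... *)
Definition match_pos (x : n.-tuple bool) (i : nat) : nat :=
  (i + find (balanced x i) (iota 1 n)) %% n.

Definition matched (x : n.-tuple bool) (j : nat) : bool :=
  matched1 x j ||
  (~~ cbit x j && [exists i : 'I_n, matched1 x i && (match_pos x i == j)]).

Definition fK (x : n.-tuple bool) : n.-tuple bool :=
  [tuple (if matched x j then ~~ tnth x j else tnth x j) | j < n].

End Kneser.

(* Main.v *)
From Stdlib Require Import ZArith Lia.
Require Import Defs.
From mathcomp Require Import all_boot zify.
Set Implicit Arguments. Unset Strict Implicit. Unset Printing Implicit Defensive.

Definition st (b : bool) : Z := if b then 1%Z else (-1)%Z.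
Fixpoint Hf n (x : n.-tuple bool) (t : nat) : Z :=
  match t with 0 => 0%Z | t'.+1 => (Hf x t' + st (cbit x t'))%Z end.
Fixpoint Mf n (x : n.-tuple bool) (t : nat) : Z :=
  match t with 0 => 0%Z
  | t'.+1 => if (Mf x t' <=? Hf x t'.+1)%Z then Mf x t' else Hf x t'.+1 end.

Arguments Hf : simpl never.
Arguments Mf : simpl never.

Lemma ivt_up (g : nat -> Z) (a d : nat) (v : Z) :
  (forall s, a <= s < a + d -> (-1 <= g s.+1 - g s <= 1)%Z) ->
  (g a <= v <= g (a + d)%N)%Z -> exists2 s, a <= s <= a + d & g s = v.
Proof.
elim: d a => [|d IH] a hs hv.
  by exists a; [lia | move: hv; rewrite addn0; lia].
case: (Z.eq_dec (g a) v) => e; first by exists a => //; lia.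
have h1 := hs a ltac:(lia).
have [s hs1 hs2] := IH a.+1 (fun s h => hs s ltac:(lia))
  ltac:(rewrite addSnnS; lia).
by exists s => //; lia.
Qed.

Lemma ivt_down (g : nat -> Z) (a d : nat) (v : Z) :
  (forall s, a <= s < a + d -> (-1 <= g s.+1 - g s <= 1)%Z) ->
  (g (a + d)%N <= v <= g a)%Z -> exists2 s, a <= s <= a + d & g s = v.
Proof.
move=> hs hv.
have [s h1 h2] := @ivt_up (fun s => - g s)%Z a d (- v)%Z
  (fun s h => ltac:(have := hs s h; lia)) ltac:(lia).
by exists s => //; lia.
Qed.

Section Core.
Variables (n : nat) (x : n.-tuple bool).
Hypothesis n0 : 0 < n.

Lemma HfS t : Hf x t.+1 = (Hf x t + st (cbit x t))%Z. Proof. by []. Qed.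
Lemma MfS t : Mf x t.+1 = if (Mf x t <=? Hf x t.+1)%Z then Mf x t else Hf x t.+1.
Proof. by []. Qed.

Lemma Hf_step t : (-1 <= Hf x t.+1 - Hf x t <= 1)%Z.
Proof. rewrite HfS /st; case: cbit; lia. Qed.

Lemma cbitD t : cbit x (t + n) = cbit x t.
Proof. by rewrite /cbit modnDr. Qed.

Lemma cbit_mod t : cbit x (t %% n) = cbit x t.
Proof. by rewrite /cbit modn_mod. Qed.

Lemma Hf_addn t : Hf x (t + n) = (Hf x t + Hf x n)%Z.
Proof.
elim: t => [|t IH]; first by rewrite add0n /=.
by rewrite addSn !HfS IH cbitD; lia.
Qed.

Lemma Hf_addqn t q : Hf x (t + q * n) = (Hf x t + Z.of_nat q * Hf x n)%Z.
Proof.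
elim: q => [|q IH]; first by rewrite mul0n addn0; lia.
have -> : t + q.+1 * n = (t + q * n) + n by rewrite mulSn; lia.
by rewrite Hf_addn IH; lia.
Qed.

Lemma Emod a l : (Hf x (a + l) - Hf x a = Hf x (a %% n + l) - Hf x (a %% n))%Z.
Proof.
have e1 : a + l = (a %% n + l) + a %/ n * n by have := divn_eq a n; lia.
have e2 : a = a %% n + a %/ n * n by have := divn_eq a n; lia.
have h2 : Hf x a = Hf x (a %% n + a %/ n * n) by rewrite -e2.
rewrite e1 h2 !Hf_addqn; lia.
Qed.

Lemma Econg a b l : a %% n = b %% n ->
  (Hf x (a + l) - Hf x a = Hf x (b + l) - Hf x b)%Z.
Proof. by move=> h; rewrite Emod h -Emod. Qed.

Lemma ones_inS i l : ones_in x i l.+1 = (ones_in x i l + cbit x (i + l))%N.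
Proof. by rewrite /ones_in big_nat_recr. Qed.

Lemma L_ones i l :
  (2 * Z.of_nat (ones_in x i l) - Z.of_nat l)%Z = (Hf x (i + l) - Hf x i)%Z.
Proof.
elim: l => [|l IH]; first by rewrite /ones_in big_geq // addn0; lia.
rewrite ones_inS addnS HfS.
move: IH; rewrite /st; case: cbit; rewrite ?addn1 ?addn0 => IH; lia.
Qed.

Lemma balancedE i l :
  balanced x i l <-> (0 < l <= n /\ Hf x (i + l) = Hf x i).
Proof.
have := L_ones i l; rewrite /balanced -mul2n => e.
split => [/andP[h /eqP e2] | [h e2]]; first by split => //; lia.
by apply/andP; split => //; apply/eqP; lia.
Qed.

Lemma Mf_le t s : s <= t -> (Mf x t <= Hf x s)%Z.
Proof.
elim: t s => [|t IH] s hs; first by move: hs; rewrite leqn0 => /eqP ->.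
rewrite MfS; case: (leqP s t) => h.
  by have := IH s h; case: Z.leb_spec; lia.
have -> : s = t.+1 by lia.
case: Z.leb_spec; lia.
Qed.

Lemma Mf_ex t : exists2 s, s <= t & Mf x t = Hf x s.
Proof.
elim: t => [|t [s hs e]]; first by exists 0.
rewrite MfS; case: Z.leb_spec => _; first by exists s => //; lia.
by exists t.+1.
Qed.

Lemma Mf_mono t : (Mf x t.+1 <= Mf x t)%Z.
Proof. rewrite MfS; case: Z.leb_spec; lia. Qed.

Lemma Mf_monoD t l : (Mf x (t + l) <= Mf x t)%Z.
Proof.
elim: l => [|l IH]; first by rewrite addn0; lia.
by rewrite addnS; have := @Mf_mono (t + l); lia.
Qed.

Lemma Mf_leH t : (Mf x t <= Hf x t)%Z.
Proof. exact: Mf_le. Qed.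

Hypothesis hneg : (Hf x n < 0)%Z.

Lemma Mf_win t : exists s, [/\ s <= t, t < s + n & Mf x t = Hf x s].
Proof.
have [s hs e] := Mf_ex t; exists s; split => //.
rewrite ltnNge; apply/negP => h.
have := Mf_le h; rewrite Hf_addn; lia.
Qed.

Lemma Mf_shift t : n <= t -> Mf x (t + n) = (Mf x t + Hf x n)%Z.
Proof.
move=> tn.
have [s [h1 h2 e]] := Mf_win (t + n).
have [s0 h3 e0] := Mf_ex t.
have u1 : (Mf x (t + n) <= Hf x (s0 + n))%Z by apply: Mf_le; lia.
rewrite Hf_addn in u1.
have h4 : s - n <= t by lia.
have u2 := Mf_le h4.
have e3 : Hf x s = (Hf x (s - n) + Hf x n)%Z by rewrite -Hf_addn subnK //; lia.
lia.
Qed.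

Lemma M1 i : matched1 x i = cbit x i.
Proof.
rewrite /matched1; case ci: (cbit x i) => //=.
have hs : forall s, 1 <= s < 1 + (n - 1) ->
   (-1 <= Hf x (i + s.+1) - Hf x (i + s) <= 1)%Z.
  by move=> s _; rewrite addnS; apply: Hf_step.
have hv : (Hf x (i + (1 + (n - 1))) <= Hf x i <= Hf x (i + 1))%Z.
  have := Hf_addn i; rewrite addn1 HfS ci /st subnKC //; lia.
have [l hl e] := @ivt_down (fun l => Hf x (i + l)) 1 (n - 1) (Hf x i) hs hv.
apply/hasP; exists l; first by rewrite mem_iota; lia.
by apply/balancedE; split => //; lia.
Qed.

Lemma find_first (P : pred nat) m L : 1 <= L <= m -> P L ->
  (forall L', 1 <= L' < L -> ~~ P L') -> find P (iota 1 m) = L.-1.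
Proof.
move=> hL hP hmin.
have -> : m = L.-1 + (m - L).+1 by lia.
rewrite iotaD find_cat size_iota.
have -> : has P (iota 1 L.-1) = false.
  by apply/hasPn => L'; rewrite mem_iota => h; apply: hmin; lia.
have -> : 1 + L.-1 = L by lia.
by rewrite /= hP addn0.
Qed.

Lemma cbit_fK t :
  cbit (fK x) t = if matched x (t %% n) then ~~ cbit x t else cbit x t.
Proof.
have hj : t %% n < n := ltn_pmod t n0.
by rewrite /cbit -[t %% n]/(nat_of_ord (Ordinal hj)) -!tnth_nth tnth_mktuple.
Qed.

Lemma ybit t : n <= t ->
  cbit (fK x) t = ~~ cbit x t && (Mf x t <=? Hf x t.+1)%Z.
Proof.
move=> tn; rewrite cbit_fK; case cx: (cbit x t).
  by rewrite /matched M1 cbit_mod cx.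
rewrite /matched M1 cbit_mod cx /=.
have hH : Hf x t.+1 = (Hf x t - 1)%Z by rewrite HfS cx.
case: ifP => [/existsP [i /andP [hm /eqP hp]] | hE].
  symmetry; apply/Z.leb_spec0.
  move: hm => /andP [_ hh].
  set m := find (balanced x i) (iota 1 n).
  have hlt : m < n by rewrite -[X in _ < X](size_iota 1 n) -has_find.
  have hb : balanced x i m.+1 by have := nth_find 0 hh; rewrite nth_iota // add1n.
  case/balancedE: hb => hb1 hb2.
  have hp' : (i + m) %% n = t %% n by rewrite -hp.
  have hmod : (t - m) %% n = i %% n.
    have : (t - m + m) %% n = (i + m) %% n by rewrite subnK ?hp' //; lia.
    by move/eqP; rewrite eqn_modDr => /eqP.
  have e1 := @Econg (t - m) i m.+1 hmod.
  have e2 : t - m + m.+1 = t.+1 by lia.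
  rewrite e2 in e1.
  have := @Mf_le t (t - m) ltac:(lia); lia.
symmetry; apply/Z.leb_spec0 => hle.
suff : [exists i : 'I_n, matched1 x i && (match_pos x i == t %% n)] by rewrite hE.
apply/existsP.
have [s [s1 s2 es]] := Mf_win t.
have hv : (Hf x s <= Hf x t.+1 <= Hf x (s + (t - s)))%Z by rewrite subnKC //; lia.
have [s' hs' es'] := @ivt_up (Hf x) s (t - s) (Hf x t.+1) (fun u _ => Hf_step u) hv.
pose P := fun L => (0 < L <= n) && (Hf x (t.+1 - L) =? Hf x t.+1)%Z.
have exP : exists L, P L.
  exists (t.+1 - s'); apply/andP; split; first lia.
  by apply/Z.eqb_spec; have -> : t.+1 - (t.+1 - s') = s' by lia.
case: (ex_minnP exP) => L /andP [hL /Z.eqb_spec hHL] hmin.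
set a := t.+1 - L.
have hHa : Hf x a = Hf x t.+1 := hHL.
have ha_def : a = t.+1 - L := erefl.
have L2 : 2 <= L.
  case: (leqP 2 L) => h //; have eL : L = 1 by lia.
  have e3 : t.+1 - L = t by lia.
  by rewrite e3 in hHL; lia.
have ca : cbit x a.
  case ca: (cbit x a) => //.
  have hv2 : (Hf x a.+1 <= Hf x t.+1 <= Hf x (a.+1 + (t - a.+1)))%Z.
    by rewrite HfS ca /st subnKC; lia.
  have [s'' h1 h2] := @ivt_up (Hf x) a.+1 (t - a.+1) (Hf x t.+1) (fun u _ => Hf_step u) hv2.
  have : P (t.+1 - s'').
    apply/andP; split; first lia.
    by apply/Z.eqb_spec; have -> : t.+1 - (t.+1 - s'') = s'' by lia.
  by move/hmin; lia.
have ha : a %% n < n := ltn_pmod a n0.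
exists (Ordinal ha); rewrite M1 /= cbit_mod ca /=.
rewrite /match_pos /=.
have hf : find (balanced x (a %% n)) (iota 1 n) = L.-1.
  apply: find_first; first lia.
  - apply/balancedE; split; first lia.
    have := @Econg (a %% n) a L (modn_mod a n).
    have -> : a + L = t.+1 by lia.
    lia.
  - move=> L' hL'; apply/negP => /balancedE [_ e].
    have e2 := @Econg (a %% n) a L' (modn_mod a n).
    have : P (L - L').
      apply/andP; split; first lia.
      apply/Z.eqb_spec; have -> : t.+1 - (L - L') = a + L' by lia.
      lia.
    by move/hmin; lia.
rewrite hf modnDml; apply/eqP; congr (_ %% n); lia.
Qed.

Lemma Gstep t : n <= t ->
  (Hf (fK x) t.+1 - Hf (fK x) t =
   (2 * Mf x t.+1 - Hf x t.+1) - (2 * Mf x t - Hf x t))%Z.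
Proof.
move=> tn; have hx := HfS t; have hm := @Mf_leH t.
have hy : Hf (fK x) t.+1 = (Hf (fK x) t + st (cbit (fK x) t))%Z by [].
rewrite ybit // in hy; have hM := MfS t.
case cx: (cbit x t) hx hy; move: hM; case: Z.leb_spec => hl hM hx hy;
  simpl in hM, hx, hy; lia.
Qed.

Lemma Gtele t l : n <= t ->
  (Hf (fK x) (t + l) - Hf (fK x) t =
   (2 * Mf x (t + l) - Hf x (t + l)) - (2 * Mf x t - Hf x t))%Z.
Proof.
move=> tn; elim: l => [|l IH]; first by rewrite addn0; lia.
by rewrite addnS; have := Gstep (_ : n <= t + l); lia.
Qed.

Lemma fK_period : (Hf (fK x) (n + n) - Hf (fK x) n = Hf x n)%Z.
Proof.
have := Gtele n (leqnn n); rewrite Mf_shift // Hf_addn; lia.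
Qed.

Lemma xform t : n <= t ->
  cbit x t = ~~ cbit (fK x) t &&
     has (fun l => (Hf (fK x) (t + l) =? Hf (fK x) t)%Z) (iota 1 n).
Proof.
move=> tn; rewrite ybit //; case cx: (cbit x t) => /=.
  symmetry; apply/hasP.
  have := M1 t; rewrite cx => /andP [_ /hasP [l0 hl0 /balancedE [hl0a hl0b]]].
  pose Q := fun l => (0 < l <= n) && (Hf x (t + l) =? Hf x t)%Z.
  have exQ : exists l, Q l by exists l0; apply/andP; split => //; apply/Z.eqb_spec.
  case: (ex_minnP exQ) => m /andP [hm /Z.eqb_spec hHm] hmin.
  have ht1 : Hf x (t + 1) = (Hf x t + 1)%Z by rewrite addn1 HfS cx.
  have hge : forall l, l <= m -> (Hf x t <= Hf x (t + l))%Z.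
    move=> l hl; case: (Z.le_gt_cases (Hf x t) (Hf x (t + l))) => // hlt.
    have hl2 : 1 <= l by case: l hl hlt => [|l]; [rewrite addn0; lia | lia].
    have hv : (Hf x (t + 1 + (l - 1)) <= Hf x t <= Hf x (t + 1))%Z.
      by rewrite -addnA subnKC //; lia.
    have [s hs es] := @ivt_down (Hf x) (t + 1) (l - 1) (Hf x t) (fun u _ => Hf_step u) hv.
    have : Q (s - t).
      apply/andP; split; first lia.
      by apply/Z.eqb_spec; rewrite subnKC //; lia.
    move/hmin => hms.
    have es2 : s = t + l by lia.
    by rewrite es2 in es; lia.
  have hM : forall l, l <= m -> Mf x (t + l) = Mf x t.
    elim=> [|l IH] hl; first by rewrite addn0.
    rewrite addnS MfS IH; last lia.
    have := hge l.+1 hl; rewrite addnS; have := @Mf_leH t.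
    case: Z.leb_spec; lia.
  exists m; first by rewrite mem_iota; lia.
  apply/Z.eqb_spec; have := @Gtele t m tn; rewrite hM //; lia.
case: Z.leb_spec => h //=.
symmetry; apply/hasPn => l; rewrite mem_iota => hl; apply/negP => /Z.eqb_spec e.
have ht1 : Hf x t.+1 = (Hf x t - 1)%Z by rewrite HfS cx.
have hMt := @Mf_leH t.
have hMt1 : Mf x t.+1 = Hf x t.+1 by rewrite MfS; case: Z.leb_spec; lia.
have hmono := @Mf_monoD t.+1 (l - 1).
have el : t.+1 + (l - 1) = t + l by lia.
rewrite el in hmono.
have := @Mf_leH (t + l); have := @Gtele t l tn; lia.
Qed.

Lemma record_exists : (- Z.of_nat n < Hf x n)%Z ->
  exists t, [/\ n < t, cbit (fK x) t = false, cbit (fK x) t.-1 = true &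
               cbit x t = false].
Proof.
move=> hpos.
pose rec := fun t => (Hf x t.+1 <? Mf x t)%Z.
have recS : forall s, rec s -> Mf x s.+1 = (Mf x s - 1)%Z.
  move=> s /Z.ltb_spec0 h; rewrite MfS; have := @Mf_leH s; have := Hf_step s.
  case: Z.leb_spec; lia.
have nrecS : forall s, ~~ rec s -> Mf x s.+1 = Mf x s.
  move=> s /negP h; rewrite MfS; case: Z.leb_spec => // h2.
  by exfalso; apply: h; apply/Z.ltb_spec0.
have [t0 [ht0a ht0b ht0c]] : exists t0, [/\ n <= t0, t0 < n + n & ~~ rec t0].
  case: (boolP [exists d : 'I_n, ~~ rec (n + d)]).
    by move/existsP => [d hd]; exists (n + d); have := ltn_ord d; split => //; lia.
  move/existsPn => hall.
  have hd : forall d, d <= n -> Mf x (n + d) = (Mf x n - Z.of_nat d)%Z.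
    elim=> [|d IH] hd; first by rewrite addn0; lia.
    rewrite addnS recS ?IH; [lia | lia |].
    have hdn : d < n by lia.
    by have := hall (Ordinal hdn); rewrite negbK.
  by have := hd n (leqnn n); rewrite Mf_shift //; lia.
have [d0 hd0] : exists d, rec (t0 + d).
  case: (boolP [exists d : 'I_n, rec (t0 + d)]); first by move/existsP => [d hd]; exists d.
  move/existsPn => hall.
  have hd : forall d, d <= n -> Mf x (t0 + d) = Mf x t0.
    elim=> [|d IH] hd; first by rewrite addn0.
    rewrite addnS nrecS ?IH //; first lia.
    have hdn : d < n by lia.
    by apply: (hall (Ordinal hdn)).
  by have := hd n (leqnn n); rewrite Mf_shift //; lia.
have exR : exists d, rec (t0 + d) by exists d0.
case: (ex_minnP exR) => d hd hmin.
have d1 : 1 <= d by case: d hd hmin => [|d]; [rewrite addn0 (negbTE ht0c) | ].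
have hprev : ~~ rec (t0 + d).-1.
  apply/negP => hr; have e : (t0 + d).-1 = t0 + (d - 1) by lia.
  by rewrite e in hr; have := hmin _ hr; lia.
move: hd hprev; set t := t0 + d => hd hprev.
have ht : t.-1.+1 = t by rewrite /t; lia.
move: hd => /Z.ltb_spec0 hd.
have hMt := @Mf_leH t.
have cxt : cbit x t = false.
  by case cx: (cbit x t) => //; move: hd; rewrite HfS cx /st; lia.
have cxt1 : cbit x t.-1 = false.
  case cx: (cbit x t.-1) => //.
  have e1 := nrecS _ hprev; rewrite ht in e1.
  have e2 := HfS t.-1; rewrite ht cx /st in e2.
  have e3 := HfS t; rewrite cxt /st in e3.
  have := @Mf_leH t.-1; lia.
exists t; split => //; first by rewrite /t; lia.
  by rewrite ybit /t; [rewrite -/t cxt /=; case: Z.leb_spec => //; lia | lia].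
rewrite ybit; last by rewrite /t; lia.
rewrite cxt1 ht /=; apply/Z.leb_spec0.
by move: hprev; rewrite /rec ht; case: Z.ltb_spec0 => // h _; lia.
Qed.

End Core.

Lemma ones_count n (z : n.-tuple bool) : ones_in z 0 n = count id z.
Proof.
rewrite -sum1_count (big_nth false) size_tuple big_mkcond /ones_in.
by apply: eq_big_nat => d /andP [_ hd]; rewrite /cbit add0n modn_small //; case: nth.
Qed.

Lemma Hf_count n (z : n.-tuple bool) : 0 < n ->
  Hf z n = (2 * Z.of_nat (count id z) - Z.of_nat n)%Z.
Proof.
move=> n0; have := L_ones z n0 0 n; rewrite add0n ones_count.
have -> : Hf z 0 = 0%Z by []. lia.
Qed.

Section Main.
Variables k n : nat.
Hypotheses (hk : 1 <= k) (hn : 2 * k + 1 <= n).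

Let n0 : 0 < n. Proof. lia. Qed.
Local Notation X := (Xnk n k).

Lemma X_Hf x : x \in X -> Hf x n = (2 * Z.of_nat k - Z.of_nat n)%Z.
Proof. by rewrite inE => /eqP hc; rewrite Hf_count // hc. Qed.

Lemma X_neg x : x \in X -> (Hf x n < 0)%Z.
Proof. by move/X_Hf => ->; lia. Qed.

Lemma fK_X x : x \in X -> fK x \in X.
Proof.
move=> hx; have e := fK_period n0 (X_neg hx); rewrite Hf_addn // in e.
have := Hf_count (fK x) n0; have := X_Hf hx.
by rewrite inE => h1 h2; apply/eqP; lia.
Qed.

Lemma cbit_tnth (z : n.-tuple bool) (i : 'I_n) : cbit z (i + n) = tnth z i.
Proof. by rewrite /cbit modnDr modn_small // (tnth_nth false). Qed.

Lemma kadj_fK x : x \in X -> kadj x (fK x).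
Proof.
move=> hx; apply/forallP => i.
by rewrite -!cbit_tnth (ybit n0 (X_neg hx)) ?leq_addl //; case: cbit.
Qed.

Lemma fK_neq x : x \in X -> fK x != x.
Proof.
move=> hx; apply/eqP => e.
have hk' : count id x = k by move: hx; rewrite inE => /eqP.
have : has id x by rewrite has_count hk'; lia.
case/hasP => b hb hbt; case/tnthP: hb => i hi.
by have := kadj_fK hx; move/forallP/(_ i); rewrite e -hi hbt.
Qed.

Lemma fK2_neq x : x \in X -> fK (fK x) != x.
Proof.
move=> hx; have hneg := X_neg hx; have hy := fK_X hx; have hnegy := X_neg hy.
have hpos : (- Z.of_nat n < Hf x n)%Z by rewrite (X_Hf hx); lia.
have [t [ht1 ht2 ht3 ht4]] := record_exists n0 hneg hpos.
apply/eqP => e.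
have hnt : n <= t by lia.
have := ybit n0 hnegy hnt; rewrite e ht4 ht2 /=.
have m1 : (Mf (fK x) t <= Hf (fK x) t.-1)%Z by apply: (Mf_le n0); exact: leq_pred.
have ht' : t.-1.+1 = t by lia.
have e1 := HfS (fK x) t.-1; rewrite ht' ht3 in e1.
have e2 := HfS (fK x) t; rewrite ht2 in e2.
rewrite /st in e1 e2.
case: Z.leb_spec => //; lia.
Qed.

Lemma fK_inj : {in X &, injective (@fK n)}.
Proof.
move=> x1 x2 h1 h2 e; apply: eq_from_tnth => i.
rewrite -!cbit_tnth (xform n0 (X_neg h1)) ?leq_addl //.
by rewrite (xform n0 (X_neg h2)) ?leq_addl // e.
Qed.

Lemma fK_onto y : y \in X -> exists2 x, x \in X & fK x = y.
Proof.
have sub : (@fK n) @: X \subset X by apply/subsetP => z /imsetP [x hx ->]; exact: fK_X.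
have card : #|(@fK n) @: X| = #|X| := card_in_imset fK_inj.
have eq : (@fK n) @: X = X by apply/eqP; rewrite eqEcard sub card leqnn.
move=> hy; have : y \in (@fK n) @: X by rewrite eq.
by case/imsetP => x hx ->; exists x.
Qed.

Lemma fK_hom : {homo (@fK n) : x / x \in X}.
Proof. exact: fK_X. Qed.

Lemma orbit_sub x : x \in X -> {subset orbit (@fK n) x <= X}.
Proof.
move=> hx y; rewrite /orbit => /trajectP [i _ ->].
by elim: i => //= i IH; exact: fK_X.
Qed.

Lemma main_aux :
  [/\ [/\ {in Xnk n k, forall x, fK x \in Xnk n k},
      {in Xnk n k &, injective (@fK n)} &
      {in Xnk n k, forall y, exists2 x, x \in Xnk n k & fK x = y}],
      {in Xnk n k, forall x,
         [/\ kadj x (fK x), fK x != x & fK (fK x) != x]},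
      {in Xnk n k, forall x,
         [/\ fcycle (@fK n) (orbit (@fK n) x),
             uniq (orbit (@fK n) x),
             3 <= size (orbit (@fK n) x),
             {subset orbit (@fK n) x <= Xnk n k} &
             cycle (@kadj n) (orbit (@fK n) x)]} &
      partition [set [set y in orbit (@fK n) x] | x in Xnk n k] (Xnk n k)].
Proof.
split.
- split; [exact: fK_X | exact: fK_inj | exact: fK_onto].
- by move=> x hx; split; [exact: kadj_fK | exact: fK_neq | exact: fK2_neq].
- move=> x hx.
  have fc := cycle_orbit_in fK_hom fK_inj hx.
  split => //.
  + rewrite size_orbit.
    have io := iter_order_in fK_hom fK_inj hx.
    case o: (order (@fK n) x) io => [|[|[|o']]] //=.
    * by have := order_gt0 (@fK n) x; rewrite o.
    * by move=> e; have := fK_neq hx; rewrite e eqxx.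
    * by move=> e; have := fK2_neq hx; rewrite e eqxx.
  + exact: orbit_sub.
  + apply: (sub_in_cycle (P := mem X) (e := frel (@fK n))) fc.
      by move=> a b ha hb /eqP <-; exact: kadj_fK.
    by apply/allP => y hy; exact: orbit_sub hy.
have -> : [set [set y in orbit (@fK n) x] | x in X] =
          equivalence_partition (fconnect (@fK n)) X.
  apply: eq_in_imset => x hx; apply/setP => y.
  rewrite in_set [in RHS]in_set -fconnect_orbit andb_idl // => h.
  by apply: (orbit_sub hx); rewrite -fconnect_orbit.
apply: equivalence_partitionP => a b c ha hb hc; split; first exact: connect0.
move=> hab; apply/idP/idP => h.
  by apply: connect_trans h; rewrite (fconnect_sym_in fK_hom fK_inj hb ha).
exact: connect_trans hab h.
Qed.

End Main.

Theorem mainTheorem6 (k n : nat) (hk : 1 <= k) (hn : 2 * k + 1 <= n) :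
  (* f is a bijection X_{n,k} -> X_{n,k} *)
  [/\ [/\ {in Xnk n k, forall x, fK x \in Xnk n k},
      {in Xnk n k &, injective (@fK n)} &
      {in Xnk n k, forall y, exists2 x, x \in Xnk n k & fK x = y}],
  (* local properties of f *)
      {in Xnk n k, forall x,
         [/\ kadj x (fK x), fK x != x & fK (fK x) != x]},
  (* C(x) = (x, f x, f^2 x, ...) until x reappears is a cycle of length >= 3
     in K(n,k) *)
      {in Xnk n k, forall x,
         [/\ fcycle (@fK n) (orbit (@fK n) x),
             uniq (orbit (@fK n) x),
             3 <= size (orbit (@fK n) x),
             {subset orbit (@fK n) x <= Xnk n k} &
             cycle (@kadj n) (orbit (@fK n) x)]} &
  (* these cycles partition the vertex set *)
      partition [set [set y in orbit (@fK n) x] | x in Xnk n k] (Xnk n k)].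
Proof. exact: main_aux hk hn. Qed.
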